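(* Let $A(t)$ be a holomorphic $2\times2$ matrix function on $|t|\le1$ with $A(0)=\operatorname{diag}(\lambda_1,\lambda_2)$, $\lambda_1-\lambda_2\in\mathbb R_{>0}$. Let $$\dot z=\frac{A(t,\varepsilon)}{(t-\alpha_0(\varepsilon))(t-\alpha_1(\varepsilon))}\,z$$ be a generic deformation with $\operatorname{Im}\alpha_0(\varepsilon)>0$. Let $t_0\in\mathbb R_{<0}$ be fixed with $|t_0|<1$, and let $M_0,M_1:H_{t_0}\to H_{t_0}$ be the monodromy operators, with eigenfunctions $f_{i1,\varepsilon},f_{i2,\varepsilon}$ numbered as in the context. Let $m_i$ be the projectivization of $M_i$, and let $p_{ij,\varepsilon}\in\mathbb P(H_{t_0})\cong\overline{\mathbb C}$ be the image of $f_{ij,\varepsilon}$ under the tautological projection. Then for all sufficiently small $\varepsilon>0$, $m_0$ and $m_1$ are hyperbolic Möbius transformations, with the following fixed points: - $p_{02,\varepsilon}$ is the repelling and $p_{01,\varepsilon}$ the attracting fixed point of $m_0$; - $p_{11,\varepsilon}$ is the repelling and $p_{12,\varepsilon}$ the attracting fixed point of $m_1$.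
   Context: Deformation: $A(t,\varepsilon)$ is holomorphic in $t$ on $|t|\le1$ and continuous in $\varepsilon\ge0$, $A(t,0)=A(t)$; $\alpha_0,\alpha_1$ are continuous, $\alpha_0+\alpha_1\equiv0$, $\alpha_i(0)=0$, $\alpha_0(\varepsilon)\ne\alpha_1(\varepsilon)$ for $\varepsilon>0$. Generic: the line through $\alpha_0(\varepsilon),\alpha_1(\varepsilon)$ meets the real axis at an angle bounded away from $0$ uniformly in $\varepsilon$. Monodromy: $H_{t_0}\cong\mathbb C^2$ is the space of local solutions at $t_0$. $l_i$ is a small counterclockwise circle around $\alpha_i$ whose closed disc excludes $\alpha_{1-i}$, $a_i=[t_0,\alpha_i]\cap l_i$, and $M_i$ is the monodromy along $[t_0,a_i]\circ l_i\circ[t_0,a_i]^{-1}$. Numbering: $\kappa_{i1},\kappa_{i2}$ are the eigenvalues of $A(\alpha_i(\varepsilon),\varepsilon)$ with $\kappa_{ij}\to\lambda_j$. $f_{ij,\varepsilon}$ is the eigenvector of $M_i$ with eigenvalue $\exp\big(2\pi i\kappa_{ij}/(\alpha_i-\alpha_{1-i})\big)$. The projectivization of an invertible linear map of $\mathbb C^2$ is the induced Möbius map of $\mathbb P^1$. A Möbius transformation is hyperbolic if it has a repelling fixed point; then it also has a unique attracting fixed point, and every orbit other than the repeller tends to the attractor. *)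

(* Defs.v *)
From Stdlib Require Import Reals.
From Coquelicot Require Import Coquelicot.

Open Scope C_scope.

Record M2 := mkM2 { e11 : C; e12 : C; e21 : C; e22 : C }.

Definition mv (M : M2) (w : C * C) : C * C :=
  (e11 M * fst w + e12 M * snd w, e21 M * fst w + e22 M * snd w).

Definition vscal (c : C) (w : C * C) : C * C := (c * fst w, c * snd w).
Definition vadd (v w : C * C) : C * C := (fst v + fst w, snd v + snd w).
Definition vzero : C * C := (RtoC 0, RtoC 0).

Definition is_eigenvalue (M : M2) (k : C) : Prop :=
  (e11 M - k) * (e22 M - k) - e12 M * e21 M = RtoC 0.

Definition is_eigenvector (M : M2) (mu : C) (v : C * C) : Prop :=
  v <> vzero /\ mv M v = vscal mu v.

Definition Cexp (z : C) : C :=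
  RtoC (exp (Re z)) * ((cos (Im z), sin (Im z)) : C).

Definition Cderiv_R (f : R -> C) (s : R) (l : C) : Prop :=
  filterlim (fun h : R => (f (s + h)%R - f s) / RtoC h) (locally' 0%R) (locally l).

Definition Ccont01 (f : R -> C) (s : R) : Prop :=
  filterlim f (within (fun u : R => (0 <= u <= 1)%R) (locally s)) (locally (f s)).

(** z : [0,1] -> C^2 solves  dz/dt = A(t,eps) / ((t-a0)(t-a1)) z  along the
    path g : [0,1] -> C with velocity g', i.e.
    dz/ds = g'(s) A(g s, eps) z(s) / ((g s - a0)(g s - a1)). *)
Definition sol_along (A : C -> R -> M2) (a0 a1 : C) (eps : R)
  (g g' : R -> C) (z : R -> C * C) : Prop :=
  (forall s, (0 <= s <= 1)%R ->
     Ccont01 (fun u => fst (z u)) s /\ Ccont01 (fun u => snd (z u)) s) /\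
  (forall s, (0 < s < 1)%R ->
     let c := g' s / ((g s - a0) * (g s - a1)) in
     let w := mv (A (g s) eps) (z s) in
     Cderiv_R (fun u => fst (z u)) s (c * fst w) /\
     Cderiv_R (fun u => snd (z u)) s (c * snd w)).

Definition seg (p q : C) (s : R) : C := p + RtoC s * (q - p).
Definition seg' (p q : C) (s : R) : C := q - p.

Definition circ (c a : C) (s : R) : C := c + (a - c) * Cexp (RtoC (2 * PI * s) * Ci).
Definition circ' (c a : C) (s : R) : C :=
  (a - c) * (RtoC (2 * PI) * Ci) * Cexp (RtoC (2 * PI * s) * Ci).

(** a_i = [t0, alpha_i] ∩ l_i, where l_i is the circle of radius r around alpha_i *)
Definition base_point (t0 : R) (ai : C) (r : R) : C :=
  ai + RtoC r * ((RtoC t0 - ai) / RtoC (Cmod (RtoC t0 - ai))).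

(** admissible radius for the small circle l_i around alpha_i = ai
    (ao = alpha_{1-i}): its closed disc excludes ao, it meets the segment
    [t0, ai] and it lies inside the unit disc. *)
Definition admissible_radius (t0 : R) (ai ao : C) (r : R) : Prop :=
  (0 < r)%R /\ (r < Cmod (ai - ao))%R /\ (r < Cmod (RtoC t0 - ai))%R /\
  (Cmod ai + r < 1)%R.

(** M is the monodromy operator on H_{t0} (identified with C^2 via the value of a
    solution at t0) along  [t0,a_i] ∘ l_i ∘ [t0,a_i]^{-1}  (first go from t0 to a_i,
    then around l_i counterclockwise, then back to t0), for the equation with
    singular points ai (= alpha_i) and ao (= alpha_{1-i}). *)
Definition is_monodromy (A : C -> R -> M2) (ai ao : C) (eps t0 r : R) (M : M2) : Prop :=
  let a := base_point t0 ai r in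
  forall z1 z2 z3 : R -> C * C,
    sol_along A ai ao eps (seg (RtoC t0) a) (seg' (RtoC t0) a) z1 ->
    sol_along A ai ao eps (circ ai a) (circ' ai a) z2 ->
    sol_along A ai ao eps (seg a (RtoC t0)) (seg' a (RtoC t0)) z3 ->
    z2 0%R = z1 1%R -> z3 0%R = z2 1%R ->
    z3 1%R = mv M (z1 0%R).

(** Projective line: a point of P(C^2) is represented by a nonzero vector.
    Affine chart of P^1 attached to a basis (v,u) of C^2 : the class of
    v + x u has coordinate x.  chart_coord v u w is the coordinate of [w]. *)
Definition det2 (v u : C * C) : C := fst v * snd u - snd v * fst u.

Definition chart_coord (v u w : C * C) : C :=
  let p := (fst w * snd u - snd w * fst u) / det2 v u in
  let q := (fst v * snd w - snd v * fst w) / det2 v u in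
  q / p.

Definition mobius_in_chart (M : M2) (v u : C * C) (x : C) : C :=
  chart_coord v u (mv M (vadd v (vscal x u))).

Definition proj_fixed_point (M : M2) (v : C * C) : Prop :=
  v <> vzero /\ exists mu : C, mv M v = vscal mu v.

(** [v] is a repelling (resp. attracting) fixed point: the multiplier, i.e. the
    complex derivative of m at [v] in an affine chart centred at [v], has
    modulus > 1 (resp. < 1). *)
Definition repelling_fixed_point (M : M2) (v : C * C) : Prop :=
  proj_fixed_point M v /\
  exists u : C * C, det2 v u <> RtoC 0 /\
  exists d : C, is_derive (mobius_in_chart M v u) (RtoC 0) d /\ (1 < Cmod d)%R.

Definition attracting_fixed_point (M : M2) (v : C * C) : Prop :=
  proj_fixed_point M v /\
  exists u : C * C, det2 v u <> RtoC 0 /\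
  exists d : C, is_derive (mobius_in_chart M v u) (RtoC 0) d /\ (Cmod d < 1)%R.

Definition hyperbolic (M : M2) : Prop := exists v, repelling_fixed_point M v.

Definition entry_fun (k : nat) (M : M2) : C :=
  match k with 0 => e11 M | 1 => e12 M | 2 => e21 M | _ => e22 M end.

Definition dom (eps0 : R) (p : C * R) : Prop :=
  (Cmod (fst p) <= 1)%R /\ (0 <= snd p < eps0)%R.

(* Main.v *)
Require Import Defs.
From Stdlib Require Import Reals Lra Psatz.
From Coquelicot Require Import Coquelicot.
Open Scope C_scope.


Lemma mob_eq (M : M2) v u a b x : mv M v = vscal a v -> mv M u = vscal b u ->
  det2 v u <> RtoC 0 -> a <> RtoC 0 -> mobius_in_chart M v u x = x * (b / a).
Proof.
  destruct v as [v1 v2], u as [u1 u2], M as [m11 m12 m21 m22].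
  unfold mv, vscal, mobius_in_chart, chart_coord, det2, vadd, vscal; simpl.
  intros Hv Hu Hd Ha.
  pose proof (f_equal fst Hv) as Hv1; pose proof (f_equal snd Hv) as Hv2;
  pose proof (f_equal fst Hu) as Hu1; pose proof (f_equal snd Hu) as Hu2; simpl in *.
  assert (E1 : m11 * (v1 + x * u1) + m12 * (v2 + x * u2) = a * v1 + x * (b * u1)).
  { rewrite <- Hv1, <- Hu1. ring. }
  assert (E2 : m21 * (v1 + x * u1) + m22 * (v2 + x * u2) = a * v2 + x * (b * u2)).
  { rewrite <- Hv2, <- Hu2. ring. }
  rewrite E1, E2. field. split; auto.
  replace ((a * v1 + x * (b * u1)) * u2 - (a * v2 + x * (b * u2)) * u1) with (a * (v1 * u2 - v2 * u1)) by ring.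
  split; [auto| apply Cmult_neq_0; auto].
Qed.

Lemma deriv_lin (k : C) : is_derive (fun x : C => x * k) (RtoC 0) k.
Proof.
  pose proof (@is_derive_scal_l C_AbsRing C_NormedModule (fun x => x) (RtoC 0) one k (is_derive_id _)) as H.
  simpl in H. unfold scal in H; simpl in H.
  assert (E : mult (@one C_Ring) k = k) by (apply mult_one_l).
  change (is_derive (fun x : C => mult x k) (RtoC 0) (mult (@one C_Ring) k)) in H; rewrite E in H.
  eapply is_derive_ext; [|exact H]. intro t. reflexivity.
Qed.

Lemma det_nz (M : M2) v u a b : is_eigenvector M a v -> is_eigenvector M b u ->
  a <> b -> det2 v u <> RtoC 0.
Proof.
  destruct v as [v1 v2], u as [u1 u2], M as [m11 m12 m21 m22].
  unfold is_eigenvector, mv, vscal, det2, vzero; simpl.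
  intros [Hv0 Hv] [Hu0 Hu] Hab HD.
  pose proof (f_equal fst Hv) as Hv1; pose proof (f_equal snd Hv) as Hv2;
  pose proof (f_equal fst Hu) as Hu1; pose proof (f_equal snd Hu) as Hu2; simpl in *.
  assert (X1 : (b - a) * (v1 * u1) = v1 * (b * u1) - u1 * (a * v1)) by ring.
  rewrite <- Hu1, <- Hv1 in X1.
  replace (v1 * (m11 * u1 + m12 * u2) - u1 * (m11 * v1 + m12 * v2)) with (m12 * (v1 * u2 - v2 * u1)) in X1 by ring.
  rewrite HD, Cmult_0_r in X1.
  assert (X2 : (b - a) * (v2 * u2) = v2 * (b * u2) - u2 * (a * v2)) by ring.
  rewrite <- Hu2, <- Hv2 in X2.
  replace (v2 * (m21 * u1 + m22 * u2) - u2 * (m21 * v1 + m22 * v2)) with (- m21 * (v1 * u2 - v2 * u1)) in X2 by ring.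
  rewrite HD, Cmult_0_r in X2.
  assert (X3 : ((b - a) * (v1 * u2)) * ((b - a) * (v1 * u2)) = ((b - a) * (v1 * u1)) * ((b - a) * (v2 * u2)) + (b-a)*(b-a)*(v1*u2)*(v1 * u2 - v2 * u1)) by ring.
  rewrite X1, HD in X3. rewrite Cmult_0_l, Cmult_0_r, Cplus_0_l in X3.
  assert (X4 : (b - a) * (v2 * u1) = (b - a) * (v1 * u2) - (b-a) * (v1 * u2 - v2 * u1)) by ring.
  rewrite HD, Cmult_0_r in X4.
  assert (Hba : b - a <> 0).
  { intro E. apply Hab. replace b with ((b - a) + a) by ring. rewrite E. ring. }
  assert (Hv' : v1 <> 0 \/ v2 <> 0).
  { destruct (Classical_Prop.classic (v1 = 0)) as [E1|E1]; [|auto].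
    destruct (Classical_Prop.classic (v2 = 0)) as [E2|E2]; [|auto].
    exfalso; apply Hv0; rewrite E1, E2; reflexivity. }
  assert (Hu' : u1 <> 0 \/ u2 <> 0).
  { destruct (Classical_Prop.classic (u1 = 0)) as [E1|E1]; [|auto].
    destruct (Classical_Prop.classic (u2 = 0)) as [E2|E2]; [|auto].
    exfalso; apply Hu0; rewrite E1, E2; reflexivity. }
  assert (H12 : v1 <> 0 -> u2 <> 0 -> False).
  { intros A1 A2. assert (N : (b - a) * (v1 * u2) <> 0) by (apply Cmult_neq_0; [auto| apply Cmult_neq_0; auto]).
    exact (Cmult_neq_0 _ _ N N X3). }
  destruct Hv' as [A1|A1], Hu' as [A2|A2].
  - apply (Cmult_neq_0 _ _ Hba (Cmult_neq_0 _ _ A1 A2)); exact X1.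
  - exact (H12 A1 A2).
  - assert (N : (b - a) * (v2 * u1) <> 0) by (apply Cmult_neq_0; [auto| apply Cmult_neq_0; auto]).
    apply N. rewrite X4. 
    destruct (Classical_Prop.classic (v1 = 0)) as [E|E].
    + rewrite E. ring.
    + destruct (Classical_Prop.classic (u2 = 0)) as [E'|E'].
      * rewrite E'. ring.
      * exfalso; exact (H12 E E').
  - apply (Cmult_neq_0 _ _ Hba (Cmult_neq_0 _ _ A1 A2)); exact X2.
Qed.

Lemma rep_att M v u a b : is_eigenvector M a v -> is_eigenvector M b u ->
  a <> RtoC 0 -> b <> RtoC 0 -> (1 < Cmod (b / a))%R ->
  repelling_fixed_point M v /\ attracting_fixed_point M u.
Proof.
  intros Hv Hu Ha Hb Hm.
  assert (Hab : a <> b).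
  { intro E. rewrite E in Hm. replace (b / b) with (RtoC 1) in Hm by (field; auto).
    rewrite Cmod_1 in Hm. lra. }
  pose proof (det_nz _ _ _ _ _ Hv Hu Hab) as D1.
  assert (D2 : det2 u v <> RtoC 0).
  { intro E; apply D1. unfold det2 in *. replace (fst v * snd u - snd v * fst u) with (- (fst u * snd v - snd u * fst v)) by ring. rewrite E. ring. }
  assert (Ca : (0 < Cmod a)%R) by (apply Cmod_gt_0; auto).
  assert (Cb : (0 < Cmod b)%R) by (apply Cmod_gt_0; auto).
  rewrite Cmod_div in Hm by auto.
  destruct Hv as [Hv0 Hv], Hu as [Hu0 Hu].
  split; split.
  - split; [auto| exists a; auto].
  - exists u; split; [auto|]. exists (b / a); split.
    + eapply is_derive_ext; [|apply deriv_lin]. intro t. symmetry. apply mob_eq; auto.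
    + rewrite Cmod_div by auto. exact Hm.
  - split; [auto| exists b; auto].
  - exists v; split; [auto|]. exists (a / b); split.
    + eapply is_derive_ext; [|apply deriv_lin]. intro t. symmetry. apply mob_eq; auto.
    + rewrite Cmod_div by auto.
      apply Rmult_lt_reg_r with (Cmod b); auto. unfold Rdiv. rewrite Rmult_assoc, Rinv_l by lra.
      apply Rmult_lt_reg_r with (/ Cmod a)%R. apply Rinv_0_lt_compat; auto.
      rewrite Rmult_1_r, Rinv_r by lra. lra.
Qed.

Lemma Cmod_Cexp z : Cmod (Cexp z) = exp (Re z).
Proof.
  unfold Cexp. rewrite Cmod_mult, Cmod_R, Rabs_pos_eq by (left; apply exp_pos).
  replace (Cmod (cos (Im z), sin (Im z))) with 1%R. ring.
  unfold Cmod; simpl. rewrite !Rmult_1_r. replace (cos (Im z) * cos (Im z) + sin (Im z) * sin (Im z))%R with 1%R.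
  symmetry; apply sqrt_1. rewrite <- (sin2_cos2 (Im z)). unfold Rsqr. ring.
Qed.

Lemma Cexp_nz z : Cexp z <> RtoC 0.
Proof. intro E. assert (H := Cmod_Cexp z). rewrite E, Cmod_0 in H. pose proof (exp_pos (Re z)). lra. Qed.

Lemma Cexp_ratio z1 z2 : (Re z2 < Re z1)%R -> (1 < Cmod (Cexp z1 / Cexp z2))%R.
Proof.
  intro H. rewrite Cmod_div by apply Cexp_nz. rewrite !Cmod_Cexp.
  pose proof (exp_increasing _ _ H). pose proof (exp_pos (Re z2)).
  apply Rmult_lt_reg_r with (exp (Re z2)); auto. unfold Rdiv. rewrite Rmult_assoc, Rinv_l by lra. lra.
Qed.

Lemma Re_form (c : R) (k w : C) : w <> RtoC 0 ->
  Re (RtoC c * Ci * k / w) = (c * (fst k * snd w - snd k * fst w) / (fst w ^ 2 + snd w ^ 2))%R.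
Proof.
  intro Hw. assert (N : (fst w ^ 2 + snd w ^ 2)%R <> 0%R).
  { intro E. apply Hw. destruct w as [w1 w2]; simpl in *.
    assert (w1 = 0)%R by nra. assert (w2 = 0)%R by nra. subst. reflexivity. }
  destruct k as [k1 k2], w as [w1 w2]. simpl in *.
  unfold Cdiv, Cinv, Cmult, Ci, RtoC; simpl. field. rewrite !Rmult_1_r in N. exact N.
Qed.

Lemma cmp (c : R) (d1 d2 w : C) : (0 < c)%R -> w <> RtoC 0 ->
  (0 < (fst d1 - fst d2) * snd w - (snd d1 - snd d2) * fst w)%R ->
  (Re (RtoC c * Ci * d2 / w) < Re (RtoC c * Ci * d1 / w))%R.
Proof.
  intros Hc Hw H. rewrite !Re_form by auto.
  assert (N : (0 < fst w ^ 2 + snd w ^ 2)%R).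
  { destruct (Rtotal_order (fst w ^ 2 + snd w ^ 2) 0) as [E|[E|E]]; try nra.
    exfalso. apply Hw. destruct w as [w1 w2]; simpl in *.
    assert (w1 = 0)%R by nra. assert (w2 = 0)%R by nra. subst. reflexivity. }
  unfold Rdiv. apply Rmult_lt_compat_r. apply Rinv_0_lt_compat; auto.
  nra.
Qed.

Lemma real_key (L c m x1 y1 x2 y2 p1 q1 p2 q2 w1 w2 : R) :
  (0 < L)%R -> (0 < c)%R -> (0 < m)%R -> (c * m <= w2)%R -> (Rabs w1 <= m)%R ->
  (p1 - p2 = L)%R -> q1 = q2 ->
  let eta := (c * L / (4 * (1 + c)))%R in
  (Rabs (x1 - p1) < eta)%R -> (Rabs (y1 - q1) < eta)%R ->
  (Rabs (x2 - p2) < eta)%R -> (Rabs (y2 - q2) < eta)%R ->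
  (0 < (x1 - x2) * w2 - (y1 - y2) * w1)%R.
Proof.
  intros HL Hc Hm Hw2 Hw1 Hp Hq eta B1 B2 B3 B4.
  assert (Heta : (eta * (4 * (1 + c)) = c * L)%R) by (unfold eta; field; lra).
  assert (Ep : (0 < eta)%R) by (unfold eta; apply Rdiv_lt_0_compat; nra).
  apply Rabs_def2 in B1, B2, B3, B4.
  assert (Hd1 : (L - 2 * eta <= x1 - x2)%R) by lra.
  assert (Hd2 : (Rabs (y1 - y2) <= 2 * eta)%R) by (apply Rabs_le; lra).
  assert (Hl : (0 < L - 2 * eta)%R) by nra.
  assert (T1 : ((L - 2 * eta) * (c * m) <= (x1 - x2) * w2)%R).
  { apply Rmult_le_compat; nra. }
  assert (T2 : ((y1 - y2) * w1 <= 2 * eta * m)%R).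
  { apply Rle_trans with (Rabs ((y1 - y2) * w1)). apply Rle_abs.
    rewrite Rabs_mult. apply Rmult_le_compat; auto using Rabs_pos. }
  assert (E : ((L - 2 * eta) * (c * m) - 2 * eta * m = m * (c * L - 2 * eta * (1 + c)))%R) by ring.
  assert (E2 : (c * L - 2 * eta * (1 + c) = c * L / 2)%R) by lra.
  assert (P : (0 < m * (c * L / 2))%R) by (apply Rmult_lt_0_compat; nra).
  rewrite E2 in E. rewrite <- E in P.
  set (A1 := ((L - 2 * eta) * (c * m))%R) in *. set (A2 := ((x1 - x2) * w2)%R) in *.
  set (A3 := ((y1 - y2) * w1)%R) in *. set (A4 := (2 * eta * m)%R) in *. lra.
Qed.

Lemma ball_C (l k : C) (e : R) : ball l e k -> (Rabs (fst k - fst l) < e)%R /\ (Rabs (snd k - snd l) < e)%R.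
Proof. intros [H1 H2]. split; [exact H1| exact H2]. Qed.

Theorem proposition4p8
  (A : C -> R -> M2) (eps0 : R) (alpha0 alpha1 : R -> C) (lambda1 lambda2 : C)
  (t0 : R) (kappa01 kappa02 kappa11 kappa12 : R -> C) :
  (0 < eps0)%R ->
  (* A(t,eps) holomorphic in t on |t| <= 1 *)
  (forall eps, (0 <= eps < eps0)%R -> forall t : C, (Cmod t <= 1)%R ->
     forall k : nat, ex_derive (fun s : C => entry_fun k (A s eps)) t) ->
  (* A continuous (jointly) in (t, eps) for |t| <= 1, eps >= 0 *)
  (forall p : C * R, dom eps0 p -> forall k : nat,
     filterlim (fun q : C * R => entry_fun k (A (fst q) (snd q)))
       (within (dom eps0) (locally p)) (locally (entry_fun k (A (fst p) (snd p))))) ->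
  (* A(0) = A(0,0) = diag(lambda1, lambda2), lambda1 - lambda2 real positive *)
  A (RtoC 0) 0%R = mkM2 lambda1 (RtoC 0) (RtoC 0) lambda2 ->
  Im (lambda1 - lambda2) = 0%R -> (0 < Re (lambda1 - lambda2))%R ->
  (* alpha_0, alpha_1 continuous, alpha_0 + alpha_1 = 0, alpha_i(0) = 0 *)
  (forall eps, (0 <= eps < eps0)%R ->
     filterlim alpha0 (within (fun e => 0 <= e < eps0)%R (locally eps)) (locally (alpha0 eps)) /\
     filterlim alpha1 (within (fun e => 0 <= e < eps0)%R (locally eps)) (locally (alpha1 eps))) ->
  (forall eps, (0 <= eps < eps0)%R -> alpha0 eps + alpha1 eps = RtoC 0) ->
  alpha0 0%R = RtoC 0 -> alpha1 0%R = RtoC 0 ->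
  (forall eps, (0 < eps < eps0)%R -> alpha0 eps <> alpha1 eps) ->
  (* genericity: the angle between the line through alpha_0, alpha_1 and the
     real axis is bounded away from 0 uniformly in eps *)
  (exists c : R, (0 < c)%R /\ forall eps, (0 < eps < eps0)%R ->
     (c * Cmod (alpha0 eps - alpha1 eps) <= Rabs (Im (alpha0 eps - alpha1 eps)))%R) ->
  (* Im alpha_0(eps) > 0 *)
  (forall eps, (0 < eps < eps0)%R -> (0 < Im (alpha0 eps))%R) ->
  (* t0 real negative, |t0| < 1 *)
  (-1 < t0 < 0)%R ->
  (* numbering of the eigenvalues kappa_ij of A(alpha_i(eps), eps), kappa_ij -> lambda_j *)
  (forall eps, (0 < eps < eps0)%R ->
     is_eigenvalue (A (alpha0 eps) eps) (kappa01 eps) /\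
     is_eigenvalue (A (alpha0 eps) eps) (kappa02 eps) /\
     is_eigenvalue (A (alpha1 eps) eps) (kappa11 eps) /\
     is_eigenvalue (A (alpha1 eps) eps) (kappa12 eps)) ->
  filterlim kappa01 (at_right 0%R) (locally lambda1) ->
  filterlim kappa02 (at_right 0%R) (locally lambda2) ->
  filterlim kappa11 (at_right 0%R) (locally lambda1) ->
  filterlim kappa12 (at_right 0%R) (locally lambda2) ->
  exists eps1 : R, (0 < eps1)%R /\
  forall eps : R, (0 < eps < eps1)%R ->
  forall (r0 r1 : R) (M0 M1 : M2) (f01 f02 f11 f12 : C * C),
    admissible_radius t0 (alpha0 eps) (alpha1 eps) r0 ->
    admissible_radius t0 (alpha1 eps) (alpha0 eps) r1 ->
    is_monodromy A (alpha0 eps) (alpha1 eps) eps t0 r0 M0 ->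
    is_monodromy A (alpha1 eps) (alpha0 eps) eps t0 r1 M1 ->
    is_eigenvector M0
      (Cexp (RtoC (2 * PI) * Ci * kappa01 eps / (alpha0 eps - alpha1 eps))) f01 ->
    is_eigenvector M0
      (Cexp (RtoC (2 * PI) * Ci * kappa02 eps / (alpha0 eps - alpha1 eps))) f02 ->
    is_eigenvector M1
      (Cexp (RtoC (2 * PI) * Ci * kappa11 eps / (alpha1 eps - alpha0 eps))) f11 ->
    is_eigenvector M1
      (Cexp (RtoC (2 * PI) * Ci * kappa12 eps / (alpha1 eps - alpha0 eps))) f12 ->
    hyperbolic M0 /\ repelling_fixed_point M0 f02 /\ attracting_fixed_point M0 f01 /\
    hyperbolic M1 /\ repelling_fixed_point M1 f11 /\ attracting_fixed_point M1 f12.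
Proof.
  intros Heps0 Hhol Hcont HA0 HIm HRe Hacont Hsum Ha00 Ha10 Hneq [c [Hc Hgen]] HIma Ht0 Heig K01 K02 K11 K12.
  set (L := Re (lambda1 - lambda2)) in *.
  set (eta := (c * L / (4 * (1 + c)))%R).
  assert (Ep : (0 < eta)%R) by (unfold eta; apply Rdiv_lt_0_compat; nra).
  pose (pe := mkposreal eta Ep).
  pose proof (K01 _ (locally_ball lambda1 pe)) as B01.
  pose proof (K02 _ (locally_ball lambda2 pe)) as B02.
  pose proof (K11 _ (locally_ball lambda1 pe)) as B11.
  pose proof (K12 _ (locally_ball lambda2 pe)) as B12.
  assert (B : at_right 0%R (fun e => (ball lambda1 pe (kappa01 e) /\ ball lambda2 pe (kappa02 e)) /\
     (ball lambda1 pe (kappa11 e) /\ ball lambda2 pe (kappa12 e)))).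
  { apply filter_and; apply filter_and; assumption. }
  destruct B as [d Hd].
  exists (Rmin d eps0). split. { apply Rmin_pos; [apply cond_pos| exact Heps0]. }
  intros eps [He1 He2] r0 r1 M0 M1 f01 f02 f11 f12 _ _ _ _ E01 E02 E11 E12.
  assert (He3 : (eps < d)%R) by (eapply Rlt_le_trans; [exact He2| apply Rmin_l]).
  assert (He4 : (eps < eps0)%R) by (eapply Rlt_le_trans; [exact He2| apply Rmin_r]).
  assert (Hb : ball 0%R d eps).
  { unfold ball; simpl. unfold AbsRing_ball, abs, minus, plus, opp; simpl. rewrite Rabs_pos_eq; lra. }
  destruct (Hd eps Hb He1) as [[C01 C02] [C11 C12]].
  apply ball_C in C01, C02, C11, C12.
  simpl in C01, C02, C11, C12.
  set (w := alpha0 eps - alpha1 eps).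
  assert (Hw : w <> RtoC 0).
  { intro E. apply (Hneq eps (conj He1 He4)). replace (alpha0 eps) with (w + alpha1 eps) by (unfold w; ring). rewrite E. ring. }
  set (m := Cmod w).
  assert (Hm : (0 < m)%R) by (apply Cmod_gt_0; auto).
  assert (Hw1 : (Rabs (fst w) <= m)%R) by apply re_le_Cmod.
  assert (Hs := f_equal snd (Hsum eps (conj (Rlt_le _ _ He1) He4))). simpl in Hs.
  assert (HI := HIma eps (conj He1 He4)). unfold Im in HI.
  assert (Hw2 : (c * m <= snd w)%R).
  { pose proof (Hgen eps (conj He1 He4)) as G. unfold Im in G. fold w m in G.
    rewrite Rabs_pos_eq in G. exact G. unfold w; simpl. lra. }
  assert (HL : (0 < L)%R) by exact HRe.
  assert (HLe : (fst lambda1 - fst lambda2 = L)%R) by reflexivity.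
  assert (HIe : snd lambda1 = snd lambda2).
  { unfold Im in HIm; simpl in HIm. lra. }
  assert (R0 : (0 < (fst (kappa01 eps) - fst (kappa02 eps)) * snd w - (snd (kappa01 eps) - snd (kappa02 eps)) * fst w)%R).
  { apply (real_key L c m _ _ _ _ (fst lambda1) (snd lambda1) (fst lambda2) (snd lambda2)); try tauto. }
  assert (R1 : (0 < (fst (kappa11 eps) - fst (kappa12 eps)) * snd w - (snd (kappa11 eps) - snd (kappa12 eps)) * fst w)%R).
  { apply (real_key L c m _ _ _ _ (fst lambda1) (snd lambda1) (fst lambda2) (snd lambda2)); try tauto. }
  assert (Hw' : alpha1 eps - alpha0 eps <> RtoC 0).
  { intro E. apply Hw. unfold w. replace (alpha0 eps - alpha1 eps) with (- (alpha1 eps - alpha0 eps)) by ring. rewrite E. ring. }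
  assert (R1' : (0 < (fst (kappa12 eps) - fst (kappa11 eps)) * snd (alpha1 eps - alpha0 eps)%C - (snd (kappa12 eps) - snd (kappa11 eps)) * fst (alpha1 eps - alpha0 eps)%C)%R).
  { unfold w in R1; simpl in R1 |- *. lra. }
  assert (P0 : (2 * PI > 0)%R) by (pose proof PI_RGT_0; lra).
  destruct (rep_att M0 f02 f01 _ _ E02 E01 (Cexp_nz _) (Cexp_nz _)) as [Rp0 At0].
  { apply Cexp_ratio. apply cmp; auto. }
  destruct (rep_att M1 f11 f12 _ _ E11 E12 (Cexp_nz _) (Cexp_nz _)) as [Rp1 At1].
  { apply Cexp_ratio. apply cmp; auto. }
  refine (conj (ex_intro _ f02 Rp0) (conj Rp0 (conj At0 (conj (ex_intro _ f11 Rp1) (conj Rp1 At1))))).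

Qed.
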